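(* Let $\widehat n\ge1$ be an integer and define $\theta_0=1/\widehat n$, $\theta_{k+1}=\frac{\sqrt{\theta_k^4+4\theta_k^2}-\theta_k^2}{2}$ for $k\ge0$, so that $\frac{1-\theta_k}{\theta_k^2}=\frac{1}{\theta_{k-1}^2}$ for all $k\ge0$, with the convention $\frac{1}{\theta_{-1}^2}=\widehat n^2-\widehat n$. Then: (1) $0\le\theta_k\le\theta_{k-1}\le\cdots\le\theta_1\le\theta_0=\frac1{\widehat n}$ for all $k\ge1$; (2) $\sum_{k=K_0}^K\frac1{\theta_k}=\frac1{\theta_K^2}-\frac1{\theta_{K_0-1}^2}$ for all integers $0\le K_0\le K$; (3) $\frac k2+\frac k{2\widehat n}+\widehat n\ge\frac1{\theta_k}\ge\frac k2+\widehat n$ for all $k\ge0$; (4) if $\upsilon>1$ and $K_0$ is a nonnegative integer with $K_0\le\left\lfloor\frac{K}{\upsilon(1+1/\widehat n)}+1\right\rfloor$, then $\frac1{\theta_K^2}-\frac1{\theta_{K_0-1}^2}\ge\left(\frac{K^2}4+\widehat nK\right)\left(1-\frac1\upsilon\right)$. *)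

(* Defs.v *)
From HB Require Import structures.
From mathcomp Require Import all_boot all_order all_algebra.
From mathcomp Require Import reals.
Set Implicit Arguments. Unset Strict Implicit. Unset Printing Implicit Defensive.
Import Order.TTheory GRing.Theory Num.Theory.
Local Open Scope ring_scope.

Fixpoint theta {R : realType} (nhat : nat) (k : nat) : R :=
  match k with
  | O => 1 / nhat%:R
  | S k' => let t := theta nhat k' in
            (Num.sqrt (t ^+ 4 + 4 * t ^+ 2) - t ^+ 2) / 2
  end.

(* inv_sq_prev nhat k = 1/theta_{k-1}^2, with the convention
   1/theta_{-1}^2 = nhat^2 - nhat. *)
Definition inv_sq_prev {R : realType} (nhat : nat) (k : nat) : R :=
  match k with
  | O => (nhat%:R) ^+ 2 - nhat%:R
  | S k' => 1 / (theta nhat k') ^+ 2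
  end.

(* Main.v *)
Require Import Defs.
From HB Require Import structures.
From mathcomp Require Import all_boot all_order all_algebra.
From mathcomp Require Import reals.
From mathcomp Require Import lra ring.
Import Order.TTheory GRing.Theory Num.Theory.
Local Open Scope ring_scope.

Section S.
Variable R : realType.

Lemma step (t : R) : 0 < t ->
  0 < (Num.sqrt (t ^+ 4 + 4 * t ^+ 2) - t ^+ 2) / 2 /\
  ((Num.sqrt (t ^+ 4 + 4 * t ^+ 2) - t ^+ 2) / 2) ^+ 2 + t ^+ 2 * ((Num.sqrt (t ^+ 4 + 4 * t ^+ 2) - t ^+ 2) / 2) = t ^+ 2.
Proof.
move=> t0.
have h : 0 < t ^+ 2 by nra.
have s0 := sqrtr_ge0 (t ^+ 4 + 4 * t ^+ 2).
have ss : (Num.sqrt (t ^+ 4 + 4 * t ^+ 2)) ^+ 2 = t ^+ 2 * t ^+ 2 + 4 * t ^+ 2.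
  rewrite sqr_sqrtr -?exprD //; nra.
move: s0 ss; rewrite -exprD /=.
move: (Num.sqrt _) => s s0 ss.
split; nra.
Qed.

Variable n : nat.
Hypothesis hn : (1 <= n)%N.

Lemma n_pos : 0 < n%:R :> R.
Proof. by rewrite ltr0n. Qed.

Lemma tpos k : 0 < theta n k :> R.
Proof.
elim: k => [|k IH] /=; first by rewrite div1r invr_gt0 n_pos.
by case: (step _ IH).
Qed.

Lemma trel k : theta n k.+1 ^+ 2 + theta n k ^+ 2 * theta n k.+1 = theta n k ^+ 2 :> R.
Proof. by case: (step _ (tpos k)). Qed.

Lemma tmono k : theta n k.+1 <= theta n k :> R.
Proof. have := trel k; have := tpos k; have := tpos k.+1; nra. Qed.

Definition a k : R := (theta n k)^-1.

Lemma apos k : 0 < a k.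
Proof. by rewrite /a invr_gt0 tpos. Qed.

Lemma arec k : a k.+1 ^+ 2 - a k.+1 = a k ^+ 2.
Proof.
have u0 := tpos k.+1; have t0 := tpos k; have E := trel k.
rewrite /a.
move: u0 t0 E; move: (theta n k.+1) (theta n k) => u t u0 t0 E.
have uu : u != 0 by rewrite gt_eqF.
have tt : t != 0 by rewrite gt_eqF.
apply/eqP; rewrite -subr_eq0; apply/eqP.
have H : (u^-1 ^+ 2 - u^-1 - t^-1 ^+ 2) * (u ^+ 2 * t ^+ 2) = t ^+ 2 - (u ^+ 2 + t ^+ 2 * u).
  by field; rewrite uu tt.
rewrite E subrr in H.
move/eqP: H; rewrite mulf_eq0 => /orP [/eqP //|].
by rewrite mulf_eq0 !expf_eq0 /= (negbTE uu) (negbTE tt).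
Qed.

Lemma a0 : a 0 = n%:R.
Proof. by rewrite /a /= div1r invrK. Qed.

Lemma astep_ge k : a k + 1/2 <= a k.+1.
Proof.
have E := arec k; have := apos k; have := apos k.+1.
move: E; move: (a k.+1) (a k) => A B E B0 A0.
have A1 : 1 < A by nra.
have F : (A - 1/2 - B) * (A - 1/2 + B) = (A ^+ 2 - A) - B ^+ 2 + 1/4 by field.
rewrite E subrr add0r in F.
nra.
Qed.

Lemma a_ge k : k%:R / 2 + n%:R <= a k.
Proof.
elim: k => [|k IH]; first by rewrite a0; lra.
have := astep_ge k; rewrite -[k.+1%:R]natr1; lra.
Qed.

Lemma a_le k : a k <= k%:R / 2 + k%:R / (2 * n%:R) + n%:R.
Proof.
have np := n_pos.
set c := (2 * n%:R)^-1.
have c0 : 0 < c by rewrite invr_gt0; lra.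
have nc : n%:R * c = 1/2 by rewrite /c; field; rewrite gt_eqF.
elim: k => [|k IH]; first by rewrite a0 mul0r; lra.
have st : a k.+1 <= a k + 1/2 + c.
  have := arec k; have := apos k; have := apos k.+1; have := a_ge k.
  have : 0 <= k%:R :> R by [].
  nra.
move: st IH; rewrite -[k.+1%:R]natr1 mulrDl mul1r; lra.
Qed.

Lemma pre k : a k ^+ 2 - inv_sq_prev n k = a k.
Proof.
case: k => [|k] /=.
  by rewrite a0; ring.
by rewrite div1r -exprVn -/(a k) -(arec k); ring.
Qed.


Lemma tsum_a K0 K : (K0 <= K)%N ->
  \sum_(K0 <= k < K.+1) a k = a K ^+ 2 - inv_sq_prev n K0.
Proof.
elim: K => [|K IH].
  by rewrite leqn0 => /eqP ->; rewrite big_nat1 pre.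
rewrite leq_eqVlt => /orP [/eqP ->|].
  by rewrite big_nat1 pre.
rewrite ltnS => H; rewrite (big_nat_recr _ _ _ (leqW H)) /= (IH H).
have := pre K.+1; rewrite /= div1r -exprVn -/(a K) => E.
lra.
Qed.

Lemma tsum K0 K : (K0 <= K)%N ->
  \sum_(K0 <= k < K.+1) 1 / theta n k = 1 / (theta n K) ^+ 2 - inv_sq_prev n K0 :> R.
Proof.
move=> H; rewrite div1r -exprVn.
under eq_bigr => i _ do rewrite div1r.
exact: tsum_a.
Qed.

Lemma inv_bound (ups : R) K0 K : 1 < ups ->
  (K0%:Z <= Num.floor (K%:R / (ups * (1 + 1 / n%:R)) + 1))%R ->
  inv_sq_prev n K0 <= (K%:R / (2 * ups) + n%:R) ^+ 2.
Proof.
move=> u1 Hf.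
have np := n_pos.
have Kp : 0 <= K%:R :> R by [].
have hK : 0 <= K%:R / (2 * ups) by apply: divr_ge0 => //; lra.
case: K0 Hf => [|m] Hf /=.
  nra.
have Hm : m.+1%:R <= K%:R / (ups * (1 + 1 / n%:R)) + 1 :> R.
  apply: le_trans (floor_le _).
  by rewrite -[m.+1%:R]/((m.+1%:Z)%:~R) ler_int.
have w0 : 0 < 1 + 1 / n%:R :> R by rewrite div1r; have := invr_gt0 (n%:R : R); rewrite np; lra.
have Hm2 : m%:R * (1 + 1 / n%:R) <= K%:R / ups.
  have : m%:R <= K%:R / (ups * (1 + 1 / n%:R)) by move: Hm; rewrite -natr1; lra.
  move/(ler_wpM2r (ltW w0)).
  have -> : K%:R / (ups * (1 + 1 / n%:R)) * (1 + 1 / n%:R) = K%:R / ups :> R.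
    by field; rewrite !gt_eqF //; lra.
  by [].
have al := a_le m.
have al2 : a m <= K%:R / (2 * ups) + n%:R.
  apply: le_trans al _.
  have -> : m%:R / 2 + m%:R / (2 * n%:R) + n%:R = m%:R * (1 + 1 / n%:R) / 2 + n%:R :> R.
    by field; rewrite gt_eqF.
  have -> : K%:R / (2 * ups) = K%:R / ups / 2 :> R by field; rewrite gt_eqF //; lra.
  lra.
rewrite div1r -exprVn -/(a m).
have := apos m; nra.
Qed.

End S.

Theorem lemma2 (R : realType) (nhat : nat) (hn : (1 <= nhat)%N) :
  (* (1) *)
  (forall k : nat, (1 <= k)%N ->
     0 <= theta nhat k :> R
     /\ (forall j : nat, (1 <= j <= k)%N -> theta nhat j <= theta nhat j.-1 :> R)
     /\ theta nhat 0 = 1 / nhat%:R :> R)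
  (* (2) *)
  /\ (forall K0 K : nat, (K0 <= K)%N ->
       \sum_(K0 <= k < K.+1) 1 / theta nhat k
       = 1 / (theta nhat K) ^+ 2 - inv_sq_prev nhat K0 :> R)
  (* (3) *)
  /\ (forall k : nat,
       k%:R / 2 + k%:R / (2 * nhat%:R) + nhat%:R >= 1 / theta nhat k :> R
       /\ 1 / theta nhat k >= k%:R / 2 + nhat%:R :> R)
  (* (4) *)
  /\ (forall (ups : R) (K0 K : nat), 1 < ups ->
       (K0%:Z <= Num.floor (K%:R / (ups * (1 + 1 / nhat%:R)) + 1))%R ->
       1 / (theta nhat K) ^+ 2 - inv_sq_prev nhat K0
       >= ((K%:R) ^+ 2 / 4 + nhat%:R * K%:R) * (1 - 1 / ups)).
Proof.
split.
  move=> k _; split; first exact: ltW ((@tpos R nhat hn) k).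
  split=> //; move=> [|j] _ //=; exact: (@tmono R nhat hn).
split; first exact: (@tsum R nhat hn).
split.
  by move=> k; rewrite div1r -/(a R nhat k); split; [exact: (@a_le R nhat hn)|exact: (@a_ge R nhat hn)].
move=> ups K0 K u1 Hf.
have ib := (@inv_bound R nhat hn ups K0 K u1 Hf).
have ag := (@a_ge R nhat hn) K.
rewrite div1r -exprVn -/(a R nhat K).
have np : 0 < nhat%:R :> R by rewrite ltr0n.
have Kp : 0 <= K%:R :> R by [].
set v := ups^-1.
have v0 : 0 < v by rewrite invr_gt0; lra.
have v1 : v < 1 by rewrite invf_lt1; lra.
have e : K%:R / (2 * ups) = K%:R * v / 2 :> R by rewrite /v; field; rewrite gt_eqF //; lra.
rewrite e in ib.
rewrite mul1r.
have H1 : (K%:R / 2 + nhat%:R) ^+ 2 <= a R nhat K ^+ 2.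
  rewrite ler_sqr ?nnegrE //; lra.
move: ib H1; move: (inv_sq_prev nhat K0) (a R nhat K ^+ 2) => p A ib H1.
have KK : 0 <= K%:R * K%:R * v * (1 - v) by apply: mulr_ge0; [apply: mulr_ge0; nra| lra].
nra.
Qed.
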